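(* Let $G=(V,E)$ be a finite simple graph, $\mathbb{K}$ a field, $R=E_{\mathbb{K}}[\mathrm{HSTAB}(G)]$ and $\omega$ the canonical ideal of $R$. Let $n\in\mathbb{Z}$ and $\mu\in\mathbb{Z}^{V^-}$. Then $T^\mu\in\omega^{(n)}$ if and only if $\mu\in U^{(n)}$, where $U^{(n)}$ is the set of $\mu\in\mathbb{Z}^{V^-}$ such that $\mu(z)\ge n$ for all $z\in V$, $\mu^+(K)\le \mu(-\infty)-n$ for every maximal clique $K$ of $G$, and $\mu^+(C)\le \mu(-\infty)\frac{\#C-1}{2}-n$ for every odd cycle $C$ of $G$ without chord and of length at least $5$.
   Context: Graphs are finite simple without loops. For $f\in\mathbb{R}^V$ (or $\mathbb{Z}^{V^-}$) and $B\subseteq V$, $f^+(B)=\sum_{b\in B}f(b)$. An odd cycle is (the vertex set $C$ of) a cycle of odd length; ''without chord'' means no two non-consecutive vertices are adjacent. $\mathrm{HSTAB}(G)$ is the set of $f\in\mathbb{R}^V$ with $f(x)\ge0$ for all $x\in V$, $f^+(K)\le1$ for every clique $K$, and $f^+(C)\le\frac{\#C-1}{2}$ for every odd cycle $C$. With $-\infty$ a new symbol, $V^-=V\cup\{-\infty\}$, $T^f=\prod_{x\in V^-}T_x^{f(x)}$ for $f\in\mathbb{Z}^{V^-}$, $\deg T_x=0$ ($x\in V$), $\deg T_{-\infty}=1$, the Ehrhart ring is $E_{\mathbb{K}}[\mathrm{HSTAB}(G)]=\mathbb{K}[T^f: f(-\infty)>0,\ \frac{1}{f(-\infty)}f|_V\in\mathrm{HSTAB}(G)]$.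 Its canonical ideal $\omega$ is the $\mathbb{K}$-span of the $T^f$ with $f(-\infty)>0$ and $\frac{1}{f(-\infty)}f|_V$ in the relative interior of $\mathrm{HSTAB}(G)$. For a Noetherian normal domain $R$ with quotient field $Q(R)$, the divisorial ideals form a group under $I\cdot J=R:_{Q(R)}(R:_{Q(R)}IJ)$; $I^{(n)}$ denotes the $n$-th power of $I$ in this group (so $\omega^{(-1)}=R:_{Q(R)}\omega$, $\omega^{(0)}=R$). *)

(* Defs.v *)
From HB Require Import structures.
From mathcomp Require Import all_boot all_order all_algebra fraction.
From mathcomp Require Import mpoly.
From mathcomp Require Import Rstruct.

Set Implicit Arguments.
Unset Strict Implicit.
Unset Printing Implicit Defensive.

Import Order.TTheory GRing.Theory Num.Theory.
Local Open Scope ring_scope.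

(* Graphs: a finite simple graph on the finite vertex type V is a      *)
(* symmetric irreflexive relation e : rel V.                            *)
(* The vertex set V^- = V ∪ {-∞} is modelled by option V, with         *)
(* None = -∞ and Some x = x.                                           *)

Section Graph.
Variables (V : finType) (e : rel V).

Definition is_clique (K : {set V}) : bool :=
  [forall x in K, forall y in K, (x != y) ==> e x y].

Definition is_maximal_clique (K : {set V}) : bool :=
  is_clique K && [forall K' : {set V}, (K \proper K') ==> ~~ is_clique K'].

Definition is_cycle_seq (s : seq V) : bool :=
  [&& (3 <= size s)%N, uniq s & cycle e s].

Definition is_odd_cycle (C : {set V}) : Prop :=
  exists s : seq V, [/\ is_cycle_seq s, odd (size s) & C = [set x in s]].

Definition is_chordless_odd_cycle (C : {set V}) : Prop :=
  exists s : seq V,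
    [/\ is_cycle_seq s, odd (size s), C = [set x in s] &
        forall (x0 : V) (i j : nat), (i < size s)%N -> (j < size s)%N ->
          e (nth x0 s i) (nth x0 s j) ->
          (j = (i.+1 %% size s)%N) \/ (i = (j.+1 %% size s)%N)].

Local Notation RR := Rdefinitions.R.

Definition HSTAB (f : V -> RR) : Prop :=
  [/\ (forall x, 0 <= f x),
      (forall K : {set V}, is_clique K -> \sum_(x in K) f x <= 1) &
      (forall C : {set V}, is_odd_cycle C ->
         \sum_(x in C) f x <= ((#|C|)%:R - 1) / 2)].

Definition affine_hull (S : (V -> RR) -> Prop) (q : V -> RR) : Prop :=
  exists (m : nat) (lam : 'I_m -> RR) (pt : 'I_m -> V -> RR),
    [/\ (forall i, S (pt i)),
        \sum_(i < m) lam i = 1 &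
        forall x, q x = \sum_(i < m) lam i * pt i x].

Definition rel_interior (S : (V -> RR) -> Prop) (p : V -> RR) : Prop :=
  S p /\ exists eps : RR, 0 < eps /\
    forall q, affine_hull S q -> (forall x, `|q x - p x| < eps) -> S q.

Definition normalize (f : option V -> int) : V -> RR :=
  fun x => (f (Some x))%:~R / (f None)%:~R.

(* The Laurent monomials T^f inside the field K(T_z : z in V^-),       *)
(* realised as the fraction field of the polynomial ring in the        *)
(* variables T_z = 'X_(enum_rank z).                                   *)

Variable K : fieldType.

Definition Lfield := {fraction {mpoly K[#|{: option V}|]}}.

Definition tofracL (p : {mpoly K[#|{: option V}|]}) : Lfield :=
  @FracField.tofrac _ p.

Definition Tvar (z : option V) : Lfield := tofracL 'X_(enum_rank z).

Definition Tmon (f : option V -> int) : Lfield :=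
  \prod_(z : option V) Tvar z ^ (f z).

Definition constL (c : K) : Lfield := tofracL (c%:MP).

Definition ehrhart_gen (f : option V -> int) : Prop :=
  (0 < f None)%R /\ HSTAB (normalize f).

(* R = E_K[HSTAB(G)] = K[T^f : f(-∞) > 0, f|_V / f(-∞) in HSTAB(G)],
   the K-subalgebra of Lfield generated by these monomials. *)
Inductive inR : Lfield -> Prop :=
  | inR_const c : inR (constL c)
  | inR_gen f : ehrhart_gen f -> inR (Tmon f)
  | inR_add a b : inR a -> inR b -> inR (a + b)
  | inR_mul a b : inR a -> inR b -> inR (a * b).

Definition QR (x : Lfield) : Prop :=
  exists a b, [/\ inR a, inR b, b != 0 & x = a / b].

Definition omega_gen (f : option V -> int) : Prop :=
  (0 < f None)%R /\ rel_interior HSTAB (normalize f).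

Definition omega (x : Lfield) : Prop :=
  exists (m : nat) (c : 'I_m -> K) (f : 'I_m -> option V -> int),
    (forall i, omega_gen (f i)) /\
    x = \sum_(i < m) constL (c i) * Tmon (f i).

(* Fractional ideals are subsets of Q(R) (predicates on Lfield).        *)

Definition colonR (I : Lfield -> Prop) (x : Lfield) : Prop :=
  QR x /\ forall y, I y -> inR (x * y).

Definition idprod (I J : Lfield -> Prop) (x : Lfield) : Prop :=
  exists (m : nat) (a b : 'I_m -> Lfield),
    (forall i, I (a i) /\ J (b i)) /\
    x = \sum_(i < m) a i * b i.

Definition dmul (I J : Lfield -> Prop) : Lfield -> Prop :=
  colonR (colonR (idprod I J)).

(* n-th power in the group: I^{(0)} = R, I^{(m)} = I . I^{(m-1)} for m>0,
   and I^{(-m)} = (I^{(-1)})^{(m)} with I^{(-1)} = R :_{Q(R)} I. *)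
Definition dpow (I : Lfield -> Prop) (n : int) : Lfield -> Prop :=
  match n with
  | Posz m => iter m (dmul I) inR
  | Negz m => iter m.+1 (dmul (colonR I)) inR
  end.

Definition in_U (n : int) (mu : option V -> int) : Prop :=
  [/\ (forall z : V, n <= mu (Some z)),
      (forall Kc : {set V}, is_maximal_clique Kc ->
         \sum_(x in Kc) mu (Some x) <= mu None - n) &
      (forall C : {set V}, is_chordless_odd_cycle C -> (5 <= #|C|)%N ->
         \sum_(x in C) mu (Some x) <= mu None * ((#|C|).-1./2)%:Z - n)].

End Graph.

(* Main.v *)
Require Import Defs.
From HB Require Import structures.
From mathcomp Require Import all_boot all_order all_algebra fraction.
From mathcomp Require Import mpoly.
From mathcomp Require Import Rstruct.
From mathcomp Require Import zify ring lra.
From Stdlib Require Classical_Prop ClassicalEpsilon.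
Import Order.TTheory GRing.Theory Num.Theory.
Local Open Scope ring_scope.
Set Implicit Arguments. Unset Strict Implicit. Unset Printing Implicit Defensive.

Section G.
Variables (V : finType) (e : rel V).
Hypothesis e_sym : ssrbool.symmetric e.
Hypothesis e_irr : irreflexive e.
Local Open Scope nat_scope.

Lemma clique_sub (K K' : {set V}) : K \subset K' -> is_clique e K' -> is_clique e K.
Proof.
move=> sKK' /forallP H; apply/forallP=> x; apply/implyP=> xK.
apply/forallP=> y; apply/implyP=> yK.
have := H x; move/implyP/(_ (subsetP sKK' _ xK))/forallP/(_ y)/implyP.
by apply; apply: (subsetP sKK').
Qed.

Lemma clique_adj (K : {set V}) x y : is_clique e K -> x \in K -> y \in K -> x != y -> e x y.
Proof.
move=> /forallP H xK yK nxy.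
by have := H x; move/implyP/(_ xK)/forallP/(_ y)/implyP/(_ yK)/implyP/(_ nxy).
Qed.

Lemma cliqueP (K : {set V}) : (forall x y, x \in K -> y \in K -> x != y -> e x y) -> is_clique e K.
Proof.
move=> H; apply/forallP=> x; apply/implyP=> xK; apply/forallP=> y; apply/implyP=> yK.
by apply/implyP; apply: H.
Qed.

Lemma max_clique_eq (K K' : {set V}) : is_maximal_clique e K -> is_clique e K' ->
  K \subset K' -> K' = K.
Proof.
move=> /andP[_ /forallP H] cK' sub.
apply/eqP; rewrite eq_sym eqEproper sub /=; apply/negP=> pr.
by have := H K'; rewrite pr /= cK'.
Qed.

Lemma ex_max_clique (K : {set V}) : is_clique e K ->
  exists K', is_maximal_clique e K' /\ K \subset K'.
Proof.
move=> cK; have [A mA sKA] := @maxset_exists _ (fun B => is_clique e B) K cK.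
exists A; split=> //; move/maxsetP: mA => [cA Hmax].
apply/andP; split=> //; apply/forallP=> B; apply/implyP=> pAB; apply/negP=> cB.
have := Hmax B cB (proper_sub pAB) => eBA.
by move: pAB; rewrite eBA properE subxx.
Qed.

Lemma clique1 z : is_clique e [set z].
Proof. by apply: cliqueP => x y; rewrite !inE => /eqP-> /eqP->; rewrite eqxx. Qed.

Lemma clique2 x y : e x y -> is_clique e [set x; y].
Proof.
move=> exy; apply: cliqueP => a b; rewrite !inE.
by move=> /orP[]/eqP-> /orP[]/eqP->; rewrite ?eqxx // e_sym.
Qed.

Lemma vertex_in_max z : exists K, is_maximal_clique e K /\ z \in K.
Proof.
have [K [mK sK]] := ex_max_clique (clique1 z).
by exists K; split=> //; apply: (subsetP sK); rewrite inE.
Qed.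

Lemma ex_max_clique0 : exists K, is_maximal_clique e K.
Proof.
have c0 : is_clique e set0 by apply: cliqueP => x y; rewrite inE.
by have [K [mK _]] := ex_max_clique c0; exists K.
Qed.

Definition nchordless (s : seq V) : bool :=
  [forall x, forall y, (x \in s) ==> (y \in s) ==> e x y ==>
     ((y == next s x) || (x == next s y))].

Lemma next_nth_mod (s : seq V) x0 i : uniq s -> (i < size s)%N ->
  next s (nth x0 s i) = nth x0 s (i.+1 %% size s).
Proof.
case: s => [|y p] // Hu Hi.
rewrite next_nth mem_nth // index_uniq //.
have [lt|eq] : (i.+1 < size (y :: p))%N \/ i.+1 = size (y :: p) by move: Hi; simpl; lia.
  rewrite modn_small //= ; by apply: set_nth_default; move: lt => /=; lia.
rewrite eq modnn /=; rewrite nth_default //; move: eq => /=; lia.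
Qed.

Lemma modS a k : (a < k)%N -> (a.+1 %% k = a.+1 /\ (a.+1 < k)%N) \/ (a.+1 %% k = 0 /\ a.+1 = k)%N.
Proof.
move=> H; have [lt|eq] : (a.+1 < k)%N \/ a.+1 = k by lia.
  by left; rewrite modn_small.
by right; rewrite eq modnn.
Qed.

Lemma chordless_next (s : seq V) : uniq s ->
  (forall (x0 : V) (i j : nat), (i < size s)%N -> (j < size s)%N ->
          e (nth x0 s i) (nth x0 s j) ->
          (j = (i.+1 %% size s)%N) \/ (i = (j.+1 %% size s)%N)) <-> nchordless s.
Proof.
move=> Hu; split.
  move=> H; apply/forallP=> x; apply/forallP=> y; apply/implyP=> xs; apply/implyP=> ys.
  apply/implyP=> exy.
  have := H x (index x s) (index y s); rewrite !index_mem !nth_index //.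
  move=> /(_ xs ys exy) [] E.
    by apply/orP; left; rewrite -(nth_index x xs) next_nth_mod ?index_mem // -E nth_index.
  by apply/orP; right; rewrite -(nth_index x ys) next_nth_mod ?index_mem // -E nth_index.
move=> /forallP H x0 i j Hi Hj E.
have := H (nth x0 s i); move/forallP/(_ (nth x0 s j)).
rewrite !mem_nth // /= E /= => /orP[] /eqP.
  rewrite next_nth_mod // => /eqP; rewrite nth_uniq // ?ltn_mod ?(leq_ltn_trans _ Hi) //.
  by move/eqP; left.
rewrite next_nth_mod // => /eqP; rewrite nth_uniq // ?ltn_mod ?(leq_ltn_trans _ Hi) //.
by move/eqP; right.
Qed.

End G.

Section G2.
Variables (V : finType) (e : rel V).
Hypothesis e_sym : ssrbool.symmetric e.
Hypothesis e_irr : irreflexive e.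
Local Open Scope nat_scope.

Lemma clique_cycle_le2 (K : {set V}) (s : seq V) :
  is_clique e K -> uniq s -> 5 <= size s ->
  (forall (x0 : V) (i j : nat), i < size s -> j < size s ->
     e (nth x0 s i) (nth x0 s j) -> j = (i.+1 %% size s) \/ i = (j.+1 %% size s)) ->
  #|K :&: [set x in s]| <= 2.
Proof.
move=> cK Hu H5 Hc; rewrite leqNgt; apply/negP => H3.
have [x xA] : exists x, x \in K :&: [set x in s].
  by apply/card_gt0P; lia.
have : 1 < #|(K :&: [set x in s]) :\ x| by move: H3; rewrite (cardsD1 x) xA; lia.
case/card_gt1P => y [z [/setD1P[nyx yA] /setD1P[nzx zA] nyz]].
move: xA yA zA; rewrite !inE => /andP[xK xs] /andP[yK ys] /andP[zK zs].
have R : forall a b, a \in K -> b \in K -> a \in s -> b \in s -> a != b ->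
   index b s = (index a s).+1 %% size s \/ index a s = (index b s).+1 %% size s.
  move=> a b aK bK a_s b_s nab; apply: (Hc a); rewrite ?index_mem ?nth_index //.
  exact: clique_adj cK aK bK nab.
have D : forall a b, a \in s -> b \in s -> a != b -> index a s <> index b s.
  move=> a b a_s b_s /eqP nab E; apply: nab; by rewrite -(nth_index a a_s) E nth_index.
have nxy : x != y by rewrite eq_sym.
have nxz : x != z by rewrite eq_sym.
have Rxy := R x y xK yK xs ys (nxy).
have Rxz := R x z xK zK xs zs (nxz).
have Ryz := R y z yK zK ys zs nyz.
have Dxy := D x y xs ys (nxy).
have Dxz := D x z xs zs (nxz).
have Dyz := D y z ys zs nyz.
have ix : index x s < size s by rewrite index_mem.
have Mx := modS ix.
have iy : index y s < size s by rewrite index_mem.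
have My := modS iy.
have iz : index z s < size s by rewrite index_mem.
have Mz := modS iz.
move: Mx My Mz ix iy iz.
move: Rxy Rxz Ryz Dxy Dxz Dyz.
move: (index x s) (index y s) (index z s) (size s) H5 => i j l k H5.
move: ((i.+1) %% k) ((j.+1) %% k) ((l.+1) %% k) => a b c.
lia.
Qed.

Lemma next_iter (s : seq V) x0 i d : uniq s -> i < size s ->
  iter d (next s) (nth x0 s i) = nth x0 s ((i + d) %% size s).
Proof.
move=> Hu Hi; elim: d => [|d IH]; first by rewrite addn0 modn_small.
rewrite iterS IH next_nth_mod // ?ltn_mod ?(leq_ltn_trans _ Hi) //.
by rewrite -addn1 modnDml addn1 addnS.
Qed.

Lemma next_ne_prev (s : seq V) x : uniq s -> 3 <= size s -> x \in s ->
  next s x != prev s x.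
Proof.
move=> Hu H3 xs; apply/negP=> /eqP E.
have : next s (next s x) = x by rewrite E next_prev.
rewrite -(nth_index x xs).
have ix : index x s < size s by rewrite index_mem.
have := next_iter x 2 Hu ix; rewrite /= => ->.
move/eqP; rewrite nth_uniq ?ltn_mod ?index_mem //; last by lia.
have : index x s < size s by rewrite index_mem.
move: (index x s) (size s) H3 => i k H3 Hi.
have [lt|[eq1|eq2]] : i + 2 < k \/ i + 2 = k \/ i + 2 = k.+1 by lia.
- by rewrite modn_small //; lia.
- by rewrite eq1 modnn; lia.
- by rewrite eq2 -addn1 modnDl modn_small; lia.
Qed.

Lemma cycle_sub_eq (s s' : seq V) : uniq s -> nchordless e s ->
  uniq s' -> cycle e s' -> 3 <= size s' -> {subset s' <= s} -> {subset s <= s'}.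
Proof.
move=> Hu Hc Hu' Hcy' H3 sub.
have clos : forall x, x \in s' -> next s x \in s'.
  move=> x xs'.
  set y1 := next s' x; set y2 := prev s' x.
  have y1s' : y1 \in s' by rewrite mem_next.
  have y2s' : y2 \in s' by rewrite mem_prev.
  have e1 : e x y1 by apply: next_cycle.
  have e2 : e x y2 by rewrite e_sym; apply: prev_cycle.
  have ne := next_ne_prev Hu' H3 xs'.
  move/forallP: Hc => Hc.
  have H1 := Hc x; move/forallP: H1 => H1.
  have := H1 y1; rewrite (sub _ xs') (sub _ y1s') e1 /= => /orP[/eqP <- //| /eqP E1].
  have := H1 y2; rewrite (sub _ xs') (sub _ y2s') e2 /= => /orP[/eqP <- //| /eqP E2].
  have : y1 = y2 by apply: (can_inj (prev_next Hu)); rewrite -E1 -E2.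
  by move/eqP; rewrite (negbTE ne).
have [x0 x0s'] : exists x, x \in s' by case: s' H3 {Hu' Hcy' sub clos} => [|a l] //; exists a; rewrite inE eqxx.
have x0s := sub _ x0s'.
have itc : forall d, iter d (next s) x0 \in s'.
  by elim=> [|d IH] //=; apply: clos.
move=> y ys.
have := itc (index y s + size s - index x0 s).
have Hi : index x0 s < size s by rewrite index_mem.
have Hj : index y s < size s by rewrite index_mem.
rewrite -[X in iter _ _ X](nth_index x0 x0s) next_iter //.
have -> : index x0 s + (index y s + size s - index x0 s) = index y s + size s by lia.
by rewrite modnDr modn_small // nth_index.
Qed.

End G2.

Section F1.
Variables (V : finType) (e : rel V).
Hypothesis e_sym : ssrbool.symmetric e.
Hypothesis e_irr : irreflexive e.
Variables (R : realFieldType) (t : R) (f : V -> R).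
Hypothesis f0 : forall z, 0 <= f z.
Hypothesis HK : forall K, is_maximal_clique e K -> \sum_(x in K) f x <= t.
Hypothesis HC : forall C, is_chordless_odd_cycle e C -> (5 <= #|C|)%N ->
  (\sum_(x in C) f x) * 2 <= t * (#|C|.-1)%:R.

Lemma sum_sub (A B : {set V}) : A \subset B -> \sum_(x in A) f x <= \sum_(x in B) f x.
Proof.
move=> sub; rewrite [X in _ <= X](big_setID A) /= (setIidPr sub).
by rewrite lerDl sumr_ge0.
Qed.

Lemma cliqueB (K : {set V}) : is_clique e K -> \sum_(x in K) f x <= t.
Proof.
move=> cK; have [K' [mK' sub]] := ex_max_clique cK.
exact: le_trans (sum_sub sub) (HK mK').
Qed.

Lemma t_ge0 : 0 <= t.
Proof. have [K mK] := ex_max_clique0 e; apply: le_trans (HK mK); exact: sumr_ge0. Qed.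

Lemma sum_seq_set (s : seq V) : uniq s ->
  \sum_(y <- s) f y = \sum_(y in [set y in s]) f y.
Proof.
by move=> Hu; rewrite big_uniq //; apply: eq_bigl => y; rewrite inE.
Qed.

Lemma pathB n : forall x P, (size P <= n)%N -> path e x P -> ~~ odd (size P) ->
  (\sum_(y <- P) f y) * 2 <= t * (size P)%:R.
Proof.
elim: n => [|n IH] x [|y1 [|y2 P]] //=; rewrite ?big_nil ?mul0r ?mulr0 //.
move=> Hs /and3P[_ e12 HP] Hodd.
rewrite negbK in Hodd.
have IHP := IH y2 P (ltac:(move: Hs; simpl; lia)) HP Hodd.
have c2 := cliqueB (clique2 e_sym e12).
have ny : y1 != y2 by apply/negP => /eqP E; move: e12; rewrite E e_irr.
rewrite big_setU1 /= ?inE // big_set1 in c2.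
rewrite !big_cons.
have -> : ((size P).+2 = size P + 2)%N by lia.
rewrite natrD; lra.
Qed.

Lemma cycleB n : forall s, (size s <= n)%N -> uniq s -> cycle e s -> odd (size s) ->
  (3 <= size s)%N -> (\sum_(y <- s) f y) * 2 <= t * ((size s).-1)%:R.
Proof.
elim: n => [|n IH] s; first by case: s.
move=> Hs Hu Hcy Hodd H3.
have [E3|G5] : size s = 3%N \/ (5 <= size s)%N.
  by move: Hodd H3; case: (size s) => [|[|[|[|[|k]]]]] //= _ _; [left|right].
  case: s E3 Hu Hcy {Hs Hodd H3} => [|a [|b [|c [|]]]] // _ Hu Hcy.
  have cl : is_clique e [set y in [:: a; b; c]].
    apply: cliqueP => x y; rewrite !inE; move: Hcy => /= /and4P[eab ebc eca _].
    by move=> /or3P[]/eqP-> /or3P[]/eqP->; rewrite ?eqxx // => _; rewrite ?eab ?ebc ?eca // e_sym.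
  have := cliqueB cl; rewrite -sum_seq_set // => H.
  have := t_ge0; rewrite /=; lra.
case Hch: (nchordless e s).
  have cC : is_chordless_odd_cycle e [set y in s].
    exists s; split=> //; first by rewrite /is_cycle_seq H3 Hu Hcy.
    exact: (proj2 (chordless_next e Hu) Hch).
  have cardC : #|[set y in s]| = size s by rewrite cardsE; apply/card_uniqP.
  by have := HC cC; rewrite cardC G5 -sum_seq_set // => /(_ isT).
move/negbT: Hch => /forallPn [x /forallPn [y]].
rewrite !negb_imply => /andP[xs /andP[ys /andP[exy /norP[ny nx]]]].
have nxy : x != y by apply/negP => /eqP E; move: exy; rewrite E e_irr.
case: (rot_to_arc Hu xs ys nxy) => i p1 p2 _ _ Er.
have Hu' : uniq (x :: p1 ++ y :: p2) by rewrite -Er rot_uniq.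
have Hcy' : cycle e (x :: p1 ++ y :: p2) by rewrite -Er rot_cycle.
have Hsz : size s = (size p1 + size p2 + 2)%N.
  by rewrite -(size_rot i) Er /= size_cat /=; lia.
have Hsum : \sum_(z <- s) f z = f x + \sum_(z <- p1) f z + f y + \sum_(z <- p2) f z.
  have pr : perm_eq (rot i s) s by rewrite (perm_rot i s) perm_refl.
  rewrite -(perm_big _ pr) Er big_cons big_cat big_cons /=.
  by rewrite !addrA.
have np1 : p1 != [::].
  apply/negP => /eqP E; move: ny; rewrite -(next_rot i Hu) Er E /= eqxx.
  by rewrite eqxx.
have np2 : p2 != [::].
  apply/negP => /eqP E; move: nx; rewrite -(next_rot i Hu) Er E next_nth.
  have yin : y \in x :: p1 ++ [:: y] by rewrite in_cons mem_cat in_cons eqxx !orbT.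
  rewrite yin.
  have ny1' : y \notin p1.
    move: Hu'; rewrite E -cat_cons cat_uniq => /and3P[_ H _]; apply: contra H => yp1.
    by apply/hasP; exists y; rewrite ?in_cons ?yp1 ?orbT ?eqxx.
  have -> : index y (x :: p1 ++ [:: y]) = (size p1).+1.
    have nyx : y != x by rewrite eq_sym.
    by rewrite /= ?(negbTE nxy) ?(negbTE nyx) index_cat (negbTE ny1') /= eqxx addn0.
  by rewrite nth_default ?size_cat //= ?eqxx // addn1.
move: Hcy'; rewrite /= rcons_cat cat_path /= => /andP[P1 /andP[E1 P2]].
have cA : cycle e (x :: rcons p1 y) by rewrite /= rcons_path rcons_path P1 E1 last_rcons e_sym exy.
have cB : cycle e (y :: rcons p2 x) by rewrite /= rcons_path P2 last_rcons exy.
have uA : uniq (x :: rcons p1 y).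
  by move: Hu'; rewrite -cat_rcons -cat_cons cat_uniq => /andP[].
have uB : uniq (y :: rcons p2 x).
  have E2 : (y :: rcons p2 x) ++ p1 = rot (size (x :: p1)) ((x :: p1) ++ (y :: p2)).
    by rewrite rot_size_cat /= cat_rcons.
  have : uniq ((y :: rcons p2 x) ++ p1) by rewrite E2 rot_uniq.
  by rewrite cat_uniq => /andP[].
have sp1 : (0 < size p1)%N by case: (p1) np1.
have sp2 : (0 < size p2)%N by case: (p2) np2.
have sumA : \sum_(z <- x :: rcons p1 y) f z = f x + \sum_(z <- p1) f z + f y.
  by rewrite big_cons -cats1 big_cat big_seq1 addrA.
have sumB : \sum_(z <- y :: rcons p2 x) f z = f y + \sum_(z <- p2) f z + f x.
  by rewrite big_cons -cats1 big_cat big_seq1 addrA.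
have szA : size (x :: rcons p1 y) = (size p1).+2 by rewrite /= size_rcons.
have szB : size (y :: rcons p2 x) = (size p2).+2 by rewrite /= size_rcons.
rewrite Hsum Hsz.
have -> : ((size p1 + size p2 + 2).-1 = size p1 + size p2 + 1)%N by rewrite addn2 addn1.
rewrite !natrD.
case Op1 : (odd (size p1)).
  have OA : odd (size (x :: rcons p1 y)) by rewrite szA /= Op1.
  have HA := IH (x :: rcons p1 y) (ltac:(rewrite szA; move: Hs sp2; rewrite Hsz; clear; lia)) uA cA OA (ltac:(rewrite szA; move: sp1; clear; lia)).
  rewrite sumA szA /= in HA.
  have ep2 : ~~ odd (size p2) by move: Hodd; rewrite Hsz !oddD Op1 /=; case: (odd (size p2)).
  have P2' : path e y p2 by move: P2; rewrite rcons_path => /andP[].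
  have Hp2 := pathB (leqnn _) P2' ep2.
  rewrite -(addn1 (size p1)) natrD in HA.
  set a := \sum_(z <- p1) f z in HA *; set b := \sum_(z <- p2) f z in Hp2 *.
  set u := (size p1)%:R in HA *; set v := (size p2)%:R in Hp2 *.
  rewrite mulrDr mulrDr in HA *. lra.
have OB : odd (size (y :: rcons p2 x)).
  by rewrite szB /=; move: Hodd; rewrite Hsz !oddD Op1 /=; case: (odd (size p2)).
have HB := IH (y :: rcons p2 x) (ltac:(rewrite szB; move: Hs sp1; rewrite Hsz; clear; lia)) uB cB OB (ltac:(rewrite szB; move: sp2; clear; lia)).
rewrite sumB szB /= in HB.
have ep1 : ~~ odd (size p1) by rewrite Op1.
have Hp1 := pathB (leqnn _) P1 ep1.
rewrite -(addn1 (size p2)) natrD in HB.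
set a := \sum_(z <- p1) f z in Hp1 *; set b := \sum_(z <- p2) f z in HB *.
set u := (size p1)%:R in Hp1 *; set v := (size p2)%:R in HB *.
rewrite mulrDr mulrDr in HB *. lra.
Qed.

Lemma oddCycleB (C : {set V}) : is_odd_cycle e C ->
  (\sum_(x in C) f x) * 2 <= t * ((#|C|).-1)%:R.
Proof.
move=> [s [/and3P[H3 Hu Hcy] Hodd ->]].
rewrite cardsE (card_uniqP Hu) -sum_seq_set //.
exact: (@cycleB (size s)).
Qed.

End F1.

Section U.
Variables (V : finType) (e : rel V).
Hypothesis e_sym : ssrbool.symmetric e.
Hypothesis e_irr : irreflexive e.

Local Notation L := (option V -> int).

Inductive facet := Fz of V | FK of {set V} | FC of {set V}.

Definition isF (i : facet) : Prop :=
  match i with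
  | Fz _ => True
  | FK K => is_maximal_clique e K
  | FC C => is_chordless_odd_cycle e C /\ (5 <= #|C|)%N
  end.

Definition sigF (i : facet) (mu : L) : int :=
  match i with
  | Fz z => mu (Some z)
  | FK K => mu None - \sum_(x in K) mu (Some x)
  | FC C => mu None * ((#|C|).-1./2)%:Z - \sum_(x in C) mu (Some x)
  end.

Lemma in_UP n mu : in_U e n mu <-> forall i, isF i -> n <= sigF i mu.
Proof.
split.
  case=> Hz HK HC [z|K|C] /=; first by move=> _; apply: Hz.
    by move=> /HK; rewrite !lerBrDr addrC.
  by case=> H1 H2; move: (HC C H1 H2); rewrite !lerBrDr addrC.
move=> H; split.
- by move=> z; apply: (H (Fz z)).
- by move=> K mK; have := H (FK K) mK; rewrite /= !lerBrDr addrC.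
- by move=> C H1 H2; have := H (FC C) (conj H1 H2); rewrite /= !lerBrDr addrC.
Qed.

Definition addL (mu nu : L) : L := fun o => mu o + nu o.
Definition scaleL (c : int) (mu : L) : L := fun o => c * mu o.

Lemma sig_add i mu nu : sigF i (addL mu nu) = sigF i mu + sigF i nu.
Proof. by case: i => [z|K|C] /=; rewrite /addL ?big_split /=; ring. Qed.

Lemma sig_scale i c mu : sigF i (scaleL c mu) = c * sigF i mu.
Proof. by case: i => [z|K|C] /=; rewrite /scaleL -?mulr_sumr /=; ring. Qed.

Lemma sig_ext i mu nu : (forall o, mu o = nu o) -> sigF i mu = sigF i nu.
Proof.
by move=> E; case: i => [z|K|C] /=; rewrite ?E //; congr (_ - _); apply: eq_bigr => x _; rewrite E.
Qed.

Lemma in_U_ext n mu nu : (forall o, mu o = nu o) -> in_U e n mu -> in_U e n nu.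
Proof. by move=> E /in_UP H; apply/in_UP => i Hi; rewrite -(sig_ext i E); apply: H. Qed.

Lemma in_U_add a b mu nu : in_U e a mu -> in_U e b nu -> in_U e (a + b) (addL mu nu).
Proof.
move=> /in_UP H1 /in_UP H2; apply/in_UP => i Hi; rewrite sig_add.
by apply: lerD; [apply: H1 | apply: H2].
Qed.

Lemma in_U_mono a b mu : a <= b -> in_U e b mu -> in_U e a mu.
Proof. by move=> ab /in_UP H; apply/in_UP => i Hi; apply: le_trans ab (H i Hi). Qed.

Lemma card_le_V (A : {set V}) : (#|A| <= #|V|)%N.
Proof. exact: max_card. Qed.

Lemma chordless_card_odd (C : {set V}) : is_chordless_odd_cycle e C -> odd #|C|.
Proof.
by move=> [s [/and3P[_ Hu _] Hodd -> _]]; rewrite cardsE (card_uniqP Hu).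
Qed.

Lemma half_ge2 (C : {set V}) : (5 <= #|C|)%N -> 2 <= ((#|C|).-1./2)%:Z.
Proof. by move=> H; rewrite lez_nat; move: H; case: #|C| => [|[|[|[|[|k]]]]] //. Qed.

Lemma half_le (C : {set V}) : ((#|C|).-1./2)%:Z <= #|V|%:Z.
Proof.
rewrite lez_nat; apply: leq_trans (card_le_V C).
apply: leq_trans (leq_pred _); rewrite -divn2; exact: leq_div.
Qed.

Lemma sum_const_int (A : {set V}) (c : int) : \sum_(x in A) c = c * #|A|%:Z.
Proof. by rewrite sumr_const -mulr_natr natz. Qed.

Lemma in_U_ex N : exists h, in_U e N h.
Proof.
have [c [cN c0]] : exists c : int, N <= c /\ 0 <= c.
  by exists `|N|%:Z; rewrite abszE ler_norm.
exists (fun o => if o is None then c * (#|V|%:Z + 1) else c).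
apply/in_UP => -[z|K|C] /=.
- by [].
- move=> _; rewrite sum_const_int.
  have := card_le_V K; rewrite -lez_nat => HK.
  move: cN c0 HK; move: (#|K|%:Z) (#|V|%:Z) c => k v cc; clear => h1 h2 h3.
  nia.
- move=> [_ H5]; rewrite sum_const_int.
  have := card_le_V C; rewrite -lez_nat => HC.
  have := half_ge2 H5; have := half_le C.
  move: cN c0 HC; move: (#|C|%:Z) (#|V|%:Z) ((#|C|).-1./2)%:Z c => k v h cc; clear => h1 h2 h3 h4 h5.
  have : 0 <= cc * ((v + 1) * h - k - 1) by apply: mulr_ge0 => //; nia.
  nia.
Qed.

Lemma good_exact i (u w : L) (B : int) : sigF i u = 1 -> sigF i w = 0 ->
  (forall j, isF j -> 1 <= sigF j w \/ (sigF j w = 0 /\ sigF j u = 1)) ->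
  (forall j, isF j -> `|sigF j u| <= B) ->
  forall a, in_U e a (addL (scaleL a u) (scaleL (`|a| * (B + 1)) w)) /\
            sigF i (addL (scaleL a u) (scaleL (`|a| * (B + 1)) w)) = a.
Proof.
move=> Hu Hw Hg HB a; split; last by rewrite sig_add !sig_scale Hu Hw; ring.
apply/in_UP => j Hj; rewrite sig_add !sig_scale.
have := HB j Hj; case: (Hg j Hj) => [W1|[-> ->]]; last by move=> _; rewrite mulr0 addr0 mulr1.
move=> Hb.
have h1 : - (`|a| * B) <= a * sigF j u.
  have : `|a * sigF j u| <= `|a| * B by rewrite normrM; apply: ler_wpM2l.
  rewrite ler_norml => /andP[] //.
have B0 : 0 <= B by apply: le_trans Hb.
have A0 : 0 <= `|a| by [].
have Aa : a <= `|a| by apply: ler_norm.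
move: h1 W1 B0 A0 Aa; move: (sigF j u) (sigF j w) (`|a|) => U W A; clear; move=> *; nia.
Qed.

End U.

Section Rich.
Variables (V : finType) (e : rel V).
Hypothesis e_sym : ssrbool.symmetric e.
Hypothesis e_irr : irreflexive e.

Local Notation L := (option V -> int).
Local Notation sigF := (@sigF V).
Local Notation isF := (@isF V e).

Definition wgen (n0 : int) (B : {set V}) (al be : int) : L :=
  fun o => match o with None => n0 | Some y => if y \in B then al else be end.

Lemma sum_if (A B : {set V}) (al be : int) :
  \sum_(x in A) (if x \in B then al else be) = al * #|A :&: B|%:Z + be * #|A :\: B|%:Z.
Proof.
rewrite (big_setID B) /=; congr (_ + _).
  rewrite -sum_const_int; apply: eq_bigr => x; rewrite inE => /andP[_ ->] //.
rewrite -sum_const_int; apply: eq_bigr => x; rewrite inE => /andP[/negbTE -> _] //.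
Qed.

Lemma sig_wgen_z z n0 B al be : sigF (Fz z) (wgen n0 B al be) = if z \in B then al else be.
Proof. by []. Qed.
Lemma sig_wgen_K K n0 B al be : sigF (FK K) (wgen n0 B al be) =
  n0 - (al * #|K :&: B|%:Z + be * #|K :\: B|%:Z).
Proof. by rewrite /= sum_if. Qed.
Lemma sig_wgen_C C n0 B al be : sigF (FC C) (wgen n0 B al be) =
  n0 * ((#|C|).-1./2)%:Z - (al * #|C :&: B|%:Z + be * #|C :\: B|%:Z).
Proof. by rewrite /= sum_if. Qed.

Lemma cardID_int (A B : {set V}) : #|A :&: B|%:Z + #|A :\: B|%:Z = #|A|%:Z.
Proof. by rewrite -PoszD cardsID. Qed.

Lemma card_le_V_int (A : {set V}) : #|A|%:Z <= #|V|%:Z.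
Proof. by rewrite lez_nat; apply: max_card. Qed.

Lemma wgen_bound n0 B al be j : isF j -> -1 <= n0 <= 1 -> -1 <= al <= 1 -> -1 <= be <= 1 ->
  `|sigF j (wgen n0 B al be)| <= 2 * #|V|%:Z + 1.
Proof.
move=> Hj /andP[n1 n2] /andP[a1 a2] /andP[b1 b2].
have V0 : 0 <= #|V|%:Z by [].
case: j Hj => [z|K|C] Hj.
- rewrite sig_wgen_z; case: ifP => _; rewrite ler_norml; apply/andP; split; lia.
- rewrite sig_wgen_K; have := cardID_int K B; have := card_le_V_int K.
  have p1 : 0 <= #|K :&: B|%:Z by []. have p2 : 0 <= #|K :\: B|%:Z by [].
  rewrite ler_norml.
  move: p1 p2 V0 n1 n2 a1 a2 b1 b2; move: #|K :&: B|%:Z #|K :\: B|%:Z #|K|%:Z #|V|%:Z => x y k v.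
  clear => *; apply/andP; split; nia.
- rewrite sig_wgen_C; have := cardID_int C B; have := card_le_V_int C.
  have p1 : 0 <= #|C :&: B|%:Z by []. have p2 : 0 <= #|C :\: B|%:Z by [].
  have h0 : 0 <= ((#|C|).-1./2)%:Z by [].
  have := half_le C.
  rewrite ler_norml.
  move: p1 p2 V0 h0 n1 n2 a1 a2 b1 b2; move: #|C :&: B|%:Z #|C :\: B|%:Z #|C|%:Z #|V|%:Z ((#|C|).-1./2)%:Z => x y k v h.
  clear => *; apply/andP; split; nia.
Qed.

Lemma half2 (C : {set V}) : odd #|C| -> 2 * ((#|C|).-1./2)%:Z = #|C|%:Z - 1.
Proof.
move: #|C| => k; case: k => [//|k] /= Ho.
have E : (k./2).*2 = k by rewrite -[RHS]odd_double_half; move: Ho; case: (odd k).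
move: E; move: (k./2) => m; rewrite -muln2 => E; subst k; lia.
Qed.

Lemma max_clique_nonempty (K : {set V}) (z : V) : is_maximal_clique e K -> (0 < #|K|)%N.
Proof.
move=> mK; rewrite card_gt0; apply/negP => /eqP K0.
move: mK => /andP[_ /forallP H]; have := H [set z].
rewrite K0 (clique1 e) implybF => /negP; apply; apply/properP; split; first exact: sub0set.
by exists z; rewrite !inE.
Qed.

Lemma chordless_ne (C : {set V}) : (5 <= #|C|)%N -> exists c, c \in C.
Proof. by move=> H; apply/set0Pn; rewrite -card_gt0; apply: leq_trans H. Qed.

Definition qV : int := #|V|%:Z + 1.

Lemma exact_z z0 a : exists mu, in_U e a mu /\ sigF (Fz z0) mu = a.
Proof.
set u := wgen 0 [set z0] 1 0; set w := wgen qV [set z0] 0 1.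
have Hu : sigF (Fz z0) u = 1 by rewrite sig_wgen_z inE eqxx.
have Hw : sigF (Fz z0) w = 0 by rewrite sig_wgen_z inE eqxx.
have HB : forall j, isF j -> `|sigF j u| <= 2 * #|V|%:Z + 1 by move=> j Hj; apply: wgen_bound.
have Hg : forall j, isF j -> 1 <= sigF j w \/ (sigF j w = 0 /\ sigF j u = 1).
  move=> [z|K|C] Hj.
  + rewrite !sig_wgen_z inE; case: eqP => _; [by right|by left].
  + left; rewrite sig_wgen_K; have := cardID_int K [set z0]; have := card_le_V_int K.
    rewrite /qV; have : 0 <= #|K :&: [set z0]|%:Z by [].
    move: #|K :&: [set z0]|%:Z #|K :\: [set z0]|%:Z #|K|%:Z #|V|%:Z => x y k v.
    clear => *; lia.
  + left; rewrite sig_wgen_C; have := cardID_int C [set z0]; have := card_le_V_int C.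
    case: Hj => _ H5; have := half_ge2 H5.
    rewrite /qV; have : 0 <= #|C :&: [set z0]|%:Z by [].
    have : 0 <= #|C :\: [set z0]|%:Z by [].
    move: #|C :&: [set z0]|%:Z #|C :\: [set z0]|%:Z #|C|%:Z #|V|%:Z ((#|C|).-1./2)%:Z => x y k v h.
    clear => *; nia.
have [H1 H2] := good_exact Hu Hw Hg HB a.
by eexists; split; [exact: H1 | exact: H2].
Qed.

End Rich.

Section Rich2.
Variables (V : finType) (e : rel V).
Hypothesis e_sym : ssrbool.symmetric e.
Hypothesis e_irr : irreflexive e.

Local Notation L := (option V -> int).
Local Notation sigF := (@sigF V).
Local Notation isF := (@isF V e).
Local Notation qV := (@qV V).

Lemma max_is_clique (K : {set V}) : is_maximal_clique e K -> is_clique e K.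
Proof. by case/andP. Qed.

Lemma exact_K K0 a : is_maximal_clique e K0 ->
  exists mu, in_U e a mu /\ sigF (FK K0) mu = a.
Proof.
move=> mK0.
set u := wgen 1 (set0 : {set V}) 0 0; set w := wgen (qV * #|K0|%:Z) K0 qV 1.
have Hu : sigF (FK K0) u = 1 by rewrite sig_wgen_K; ring.
have Hw : sigF (FK K0) w = 0 by rewrite sig_wgen_K setIid setDv cards0; ring.
have HB : forall j, isF j -> `|sigF j u| <= 2 * #|V|%:Z + 1.
  by move=> j Hj; apply: (@wgen_bound V e _ _ _ _ j Hj).

have Hg : forall j, isF j -> 1 <= sigF j w \/ (sigF j w = 0 /\ sigF j u = 1).
  move=> [z|K|C] Hj.
  + left; rewrite sig_wgen_z /qV; case: ifP => _ //; have : 0 <= #|V|%:Z by []. lia.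
  + case: (eqVneq K K0) => [->|nK]; first by right.
    left; rewrite sig_wgen_K.
    have lt : (#|K :&: K0| < #|K0|)%N.
      apply: proper_card; rewrite properEneq subsetIr andbT.
      apply/negP => /eqP E; apply: (negP nK); apply/eqP.
      apply: (max_clique_eq mK0 (max_is_clique Hj)); by rewrite -E subsetIl.
    have := cardID_int K K0; have := card_le_V_int K.
    move: lt; rewrite -ltz_nat /qV => lt.
    have : 0 <= #|K :&: K0|%:Z by []. have : 0 <= #|K :\: K0|%:Z by [].
    move: #|K :&: K0|%:Z #|K :\: K0|%:Z #|K|%:Z #|V|%:Z #|K0|%:Z lt => x y k v k0.
    clear => *.
    have : (v + 1) * (x + 1) <= (v + 1) * k0 by apply: ler_wpM2l; lia.
    nia.
  + left; rewrite sig_wgen_C; case: Hj => HC H5.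
    have [c cC] := chordless_ne H5.
    have k0pos := max_clique_nonempty c mK0.
    have le : (#|C :&: K0| <= #|K0|)%N by apply: subset_leq_card; apply: subsetIr.
    move: le k0pos; rewrite -lez_nat -ltz_nat => le k0pos.
    have := cardID_int C K0; have := card_le_V_int C; have := half_ge2 H5.
    rewrite /qV; have : 0 <= #|C :&: K0|%:Z by []. have : 0 <= #|C :\: K0|%:Z by [].
    move: #|C :&: K0|%:Z #|C :\: K0|%:Z #|C|%:Z #|V|%:Z #|K0|%:Z ((#|C|).-1./2)%:Z le k0pos => x y k v k0 h.
    clear => *.
    have : (v + 1) * k0 * 2 <= (v + 1) * k0 * h by apply: ler_wpM2l => //; nia.
    nia.
have [H1 H2] := good_exact Hu Hw Hg HB a.
by eexists; split; [exact: H1 | exact: H2].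
Qed.

End Rich2.

Section Rich3.
Variables (V : finType) (e : rel V).
Hypothesis e_sym : ssrbool.symmetric e.
Hypothesis e_irr : irreflexive e.

Local Notation L := (option V -> int).
Local Notation sigF := (@sigF V).
Local Notation isF := (@isF V e).
Local Notation qV := (@qV V).

Lemma exact_C C0 a : is_chordless_odd_cycle e C0 -> (5 <= #|C0|)%N ->
  exists mu, in_U e a mu /\ sigF (FC C0) mu = a.
Proof.
move=> HC0 H5.
have Hodd0 := chordless_card_odd HC0.
have hh0 := half2 Hodd0.
move: (HC0) => [s0 [/and3P[H3s0 Hu0 Hcy0] _ E0 Hch0]].
have nch0 : nchordless e s0 := proj1 (chordless_next e Hu0) Hch0.
have [c0 c0C] := chordless_ne H5.
have [k Ek] : exists k, k = #|C0|%:Z by eexists.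
have k5 : 5 <= k by rewrite Ek lez_nat.
set u := wgen 0 [set c0] (-1) 0; set w := wgen (2 * k * qV) C0 ((k - 1) * qV) 1.
have Hu : sigF (FC C0) u = 1.
  by rewrite sig_wgen_C (setIidPr _) ?sub1set // cards1; ring.
have Hw : sigF (FC C0) w = 0.
  rewrite sig_wgen_C setIid setDv cards0 -Ek.
  have -> : 2 * k * qV * ((#|C0|).-1./2)%:Z = k * qV * (2 * ((#|C0|).-1./2)%:Z) by ring.
  rewrite hh0 -Ek; ring.
have HB : forall j, isF j -> `|sigF j u| <= 2 * #|V|%:Z + 1.
  by move=> j Hj; apply: (@wgen_bound V e _ _ _ _ j Hj).
have Hg : forall j, isF j -> 1 <= sigF j w \/ (sigF j w = 0 /\ sigF j u = 1).
  move=> [z|K|C] Hj.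
  + left; rewrite sig_wgen_z /qV; clear HB Hw Hu w u Ek; have : 0 <= #|V|%:Z by [].
    move: k5; case: ifP => _; move: (#|V|%:Z) k => v kk; clear => *; nia.
  + left; rewrite sig_wgen_K; clear HB Hw Hu w u Ek.
    have le2 : (#|K :&: C0| <= 2)%N.
      rewrite E0; apply: (clique_cycle_le2 (max_is_clique Hj) Hu0) => //.
      by move: H5; rewrite E0 cardsE (card_uniqP Hu0).
    move: le2; rewrite -lez_nat => le2.
    have := cardID_int K C0; have := card_le_V_int K.
    rewrite /qV; have : 0 <= #|V|%:Z by []. have : 0 <= #|K :&: C0|%:Z by []. have : 0 <= #|K :\: C0|%:Z by [].
    move: #|K :&: C0|%:Z #|K :\: C0|%:Z #|K|%:Z #|V|%:Z k le2 k5 => x y kk v k0.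
    clear => *.
    have : (k0 - 1) * (v + 1) * x <= (k0 - 1) * (v + 1) * 2.
      by apply: ler_wpM2l => //; nia.
    nia.
  + case: (eqVneq C C0) => [->|nC]; first by right.
    left; rewrite sig_wgen_C; clear HB Hw Hu w u Ek; case: Hj => HC H5'.
    have hh := half2 (chordless_card_odd HC).
    move: (HC) => [s [/and3P[H3s Hu Hcy] _ E _]].
    have lt : (#|C :&: C0| < #|C|)%N.
      apply: proper_card; rewrite properEneq subsetIl andbT.
      apply/negP => /eqP EE; apply: (negP nC); apply/eqP.
      have sub : {subset s <= s0}.
        move=> x xs; have : x \in C :&: C0 by rewrite EE E inE.
        by rewrite E0 inE => /andP[_]; rewrite inE.
      have sub' := cycle_sub_eq e_sym Hu0 nch0 Hu Hcy H3s sub.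
      apply/eqP; rewrite eqEsubset; apply/andP; split; apply/subsetP => x.
        by rewrite E E0 !inE; apply: sub.
      by rewrite E E0 !inE; apply: sub'.
    move: lt; rewrite -ltz_nat => lt.
    have := cardID_int C C0; have := card_le_V_int C.
    have k5' : 5 <= #|C|%:Z by rewrite lez_nat.
    rewrite /qV; have : 0 <= #|V|%:Z by []. have : 0 <= #|C :&: C0|%:Z by []. have : 0 <= #|C :\: C0|%:Z by [].
    move: #|C :&: C0|%:Z #|C :\: C0|%:Z #|C|%:Z #|V|%:Z k ((#|C|).-1./2)%:Z hh lt k5 k5' => x y kk v k0 h.
    clear => hh *.
    have -> : 2 * k0 * (v + 1) * h = k0 * (v + 1) * (2 * h) by ring.
    rewrite hh.
    have : (k0 - 1) * (v + 1) * x <= (k0 - 1) * (v + 1) * (kk - 1).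
      by apply: ler_wpM2l => //; nia.
    nia.
have [H1 H2] := good_exact Hu Hw Hg HB a.
by eexists; split; [exact: H1 | exact: H2].
Qed.

Lemma exact_pt i a : isF i -> exists mu, in_U e a mu /\ sigF i mu = a.
Proof.
case: i => [z|K|C] /=.
- by move=> _; apply: exact_z.
- by move=> mK; apply: exact_K.
- by move=> [H1 H2]; apply: exact_C.
Qed.

Lemma richness g a b : ~ in_U e (a + b) g ->
  exists mu1 mu2, [/\ in_U e (- a) mu1, in_U e (- b) mu2 &
                     ~ in_U e 0 (addL g (addL mu1 mu2))].
Proof.
move=> H.
have [i [Hi lt]] : exists i, isF i /\ sigF i g < a + b.
  apply: Classical_Prop.NNPP => N; apply: H; apply/in_UP => i Hi.
  rewrite leNgt; apply/negP => lt; apply: N; by exists i.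
have [m1 [H1 E1]] := exact_pt (- a) Hi.
have [m2 [H2 E2]] := exact_pt (- b) Hi.
exists m1, m2; split=> // /in_UP /(_ i Hi).
rewrite !sig_add E1 E2; move: lt; move: (sigF i g) => s; clear => *; lia.
Qed.

End Rich3.

Local Notation RR := Rdefinitions.R.

Lemma sum_option (V : finType) (R : nmodType) (F : option V -> R) :
  \sum_(o : option V) F o = F None + \sum_(z : V) F (Some z).
Proof.
have inj : injective (@Some V) by move=> x y [].
have P : perm_eq (index_enum {: option V}) (None :: map Some (enum V)).
  apply: uniq_perm; first exact: index_enum_uniq.
    rewrite /= map_inj_uniq ?enum_uniq ?andbT //.
    by apply/mapP => -[].
  by move=> [x|]; rewrite mem_index_enum /= ?inE //= (mem_map inj) mem_enum.
rewrite (perm_big _ P) big_cons big_map big_enum //.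
Qed.

Lemma intr_sum (I : Type) (r : seq I) (P : pred I) (F : I -> int) :
  (\sum_(i <- r | P i) F i)%:~R = \sum_(i <- r | P i) (F i)%:~R :> RR.
Proof. by elim/big_rec2: _ => // i a b _ <-; rewrite intrD. Qed.

Section Real.
Variables (V : finType) (e : rel V).
Hypothesis e_sym : ssrbool.symmetric e.
Hypothesis e_irr : irreflexive e.

Lemma sum_norm (A : {set V}) (f : option V -> int) :
  \sum_(x in A) normalize f x = (\sum_(x in A) f (Some x))%:~R / (f None)%:~R.
Proof. by rewrite /normalize -mulr_suml intr_sum. Qed.

Lemma chordless_is_odd (C : {set V}) : is_chordless_odd_cycle e C -> is_odd_cycle e C.
Proof. by move=> [s [H1 H2 H3 _]]; exists s. Qed.

Lemma odd_cycle_card (C : {set V}) : is_odd_cycle e C -> (3 <= #|C|)%N.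
Proof. by move=> [s [/and3P[H3 Hu _] _ ->]]; rewrite cardsE (card_uniqP Hu). Qed.

Lemma half2R (C : {set V}) : odd #|C| -> 2 * (((#|C|).-1./2)%:Z)%:~R = (#|C|)%:R - 1 :> RR.
Proof.
move=> Ho; have := half2 Ho => E.
have : (2 * ((#|C|).-1./2)%:Z)%:~R = (#|C|%:Z - 1)%:~R :> RR by rewrite E.
by rewrite intrM intrB /=.
Qed.

Lemma predn_R (n : nat) : (0 < n)%N -> (n.-1)%:R = n%:R - 1 :> RR.
Proof. by case: n => // n _; rewrite /= -addn1 natrD addrK. Qed.

Lemma ehr_iff (f : option V -> int) : ehrhart_gen e f <-> 0 < f None /\ in_U e 0 f.
Proof.
have Hodd := @chordless_card_odd V e.
split.
  move=> [fpos [H0 HKc HCc]]; split => //.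
  have tpos : 0 < (f None)%:~R :> RR by rewrite ltr0z.
  apply/in_UP => -[z|K|C] /= Hi.
  - by have := H0 z; rewrite /normalize ler_pdivlMr // mul0r ler0z.
  - have := HKc K (max_is_clique Hi); rewrite sum_norm ler_pdivrMr // mul1r ler_int.
    by rewrite subr_ge0.
  - case: Hi => HC H5.
    have := HCc C (chordless_is_odd HC); rewrite sum_norm ler_pdivrMr //.
    rewrite -(half2R (Hodd _ HC)) subr_ge0 -(ler_int RR) intrM.
    move: ((\sum_(x in C) f (Some x))%:~R) ((f None)%:~R) ((((#|C|).-1./2)%:Z)%:~R) => S t h.
    by move=> H; apply: (le_trans H); rewrite [2 * h]mulrC mulfK ?pnatr_eq0 // mulrC.
move=> [fpos /in_UP H]; split => //.
have tpos : 0 < (f None)%:~R :> RR by rewrite ltr0z.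
pose g := normalize f.
have g0 : forall z, 0 <= g z.
  by move=> z; rewrite /g /normalize divr_ge0 // ?(ltW tpos) // ler0z; apply: (H (Fz z) I).
have gK : forall K, is_maximal_clique e K -> \sum_(x in K) g x <= 1.
  move=> K mK; have := H (FK K) mK; rewrite /= subr_ge0.
  by rewrite /g sum_norm ler_pdivrMr // mul1r ler_int.
have gC : forall C, is_chordless_odd_cycle e C -> (5 <= #|C|)%N ->
    (\sum_(x in C) g x) * 2 <= 1 * ((#|C|).-1)%:R.
  move=> C HC H5; have := H (FC C) (conj HC H5); rewrite /= subr_ge0 -(ler_int RR) intrM.
  move=> Hle.
  rewrite /g sum_norm predn_R ?(leq_trans _ H5) // -(half2R (Hodd _ HC)) mul1r.
  rewrite mulrC; apply: ler_wpM2l => //; rewrite ler_pdivrMr // mulrC.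
  exact: Hle.
split.
- exact: g0.
- by move=> K cK; apply: (cliqueB g0 gK cK).
- move=> C HCo; have := oddCycleB e_sym e_irr g0 gK gC HCo.
  rewrite mul1r predn_R ?(leq_trans _ (odd_cycle_card HCo)) //.
  by rewrite ler_pdivlMr.
Qed.

End Real.

Section Real2.
Variables (V : finType) (e : rel V).
Hypothesis e_sym : ssrbool.symmetric e.
Hypothesis e_irr : irreflexive e.

Lemma sum_ind (A : {set V}) z :
  \sum_(x in A) (if x == z then 1 else 0 : RR) = if z \in A then 1 else 0.
Proof.
case: (boolP (z \in A)) => zA.
  rewrite (bigD1 z) //= eqxx big1 ?addr0 // => x /andP[_ /negbTE ->] //.
rewrite big1 // => x xA; case: eqP => // E; subst x; by rewrite xA in zA.
Qed.

Definition indP (o : option V) : V -> RR :=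
  match o with None => fun _ => 0 | Some z => fun x => if x == z then 1 else 0 end.

Lemma HSTAB_indP o : HSTAB e (indP o).
Proof.
have half1 : forall C : {set V}, is_odd_cycle e C -> 1 <= ((#|C|)%:R - 1) / 2 :> RR.
  move=> C HC; have := odd_cycle_card HC; rewrite -(ler_nat RR) => H3.
  rewrite ler_pdivlMr //; lra.
case: o => [z|] /=; split.
- by move=> x; case: eqP.
- by move=> K _; rewrite sum_ind; case: ifP.
- by move=> C HC; rewrite sum_ind; apply: le_trans (half1 C HC); case: ifP.
- by [].
- by move=> K _; rewrite big1.
- by move=> C HC; rewrite big1 //; apply: le_trans (half1 C HC).
Qed.

Lemma aff_all (q : V -> RR) : affine_hull (HSTAB e) q.
Proof.
pose Lm (o : option V) : RR := match o with None => 1 - \sum_z q z | Some z => q z end.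
exists #|{: option V}|, (fun i => Lm (enum_val i)), (fun i => indP (enum_val i)); split.
- by move=> i; apply: HSTAB_indP.
- rewrite -(big_enum_val (fun o => Lm o)) /=.
  rewrite (eq_bigl (fun _ => true)) // sum_option /=; ring.
- move=> x; rewrite -(big_enum_val (fun o => Lm o * indP o x)) /=.
  rewrite (eq_bigl (fun _ => true)) // sum_option /= mulr0 add0r.
  rewrite (bigD1 x) //= eqxx mulr1 big1 ?addr0 // => z /negbTE.
  by rewrite eq_sym => ->; rewrite mulr0.
Qed.

Definition bump (p : V -> RR) (v : V) (d : RR) : V -> RR :=
  fun x => if x == v then p x + d else p x.

Lemma sum_bump (A : {set V}) p v d : v \in A ->
  \sum_(x in A) bump p v d x = \sum_(x in A) p x + d.
Proof.
move=> vA; rewrite (bigD1 v) //= [in RHS](bigD1 v) //= /bump eqxx.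
rewrite (eq_bigr (fun x => p x)); first by ring.
by move=> x /andP[_ /negbTE ->].
Qed.

Lemma bump_close p v d eps : `|d| < eps -> forall x, `|bump p v d x - p x| < eps.
Proof.
move=> H x; rewrite /bump; case: eqP => _; first by rewrite addrC addKr.
by rewrite subrr normr0; apply: le_lt_trans H.
Qed.

Lemma real_help (S t H v k : RR) : 0 < t -> 0 <= v -> 0 <= k -> k <= v -> S <= t * H - 1 ->
  S / t + k * (t * (v + 1))^-1 <= H.
Proof.
move=> tp v0 k0 kv HS.
have v1 : v + 1 != 0 by rewrite gt_eqF //; lra.
have t1 : t != 0 by rewrite gt_eqF.
have a : S / t <= H - t^-1.
  by rewrite ler_pdivrMr // mulrBl mulVf //; rewrite mulrC.
have b : k * (t * (v + 1))^-1 <= t^-1.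
  have -> : t^-1 = (v + 1) * (t * (v + 1))^-1 by rewrite invfM mulrCA divff // mulr1.
  by apply: ler_wpM2r; [rewrite invr_ge0 mulr_ge0 //; lra | lra].
lra.
Qed.

Lemma omega_iff (f : option V -> int) : omega_gen e f <-> in_U e 1 f.
Proof.
have Hodd := @chordless_card_odd V e.
split.
  move=> [fpos [Hp [eps [epos Heps]]]].
  have tpos : 0 < (f None)%:~R :> RR by rewrite ltr0z.
  have /in_UP H0 : in_U e 0 f by case: (proj1 (ehr_iff e_sym e_irr f) (conj fpos Hp)).
  apply/in_UP => i Hi; rewrite leNgt; apply/negP => lt1.
  have s0 : sigF i f = 0 by have := H0 i Hi; move: lt1; move: (sigF i f) => s; clear => *; lia.
  have eps2 : `|eps / 2| < eps by rewrite ger0_norm; lra.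
  have eps2' : `|- (eps / 2)| < eps by rewrite normrN ger0_norm; lra.
  case: i Hi s0 {lt1} => [z|K|C] /= Hi s0.
  - have [Hq _ _] := Heps _ (aff_all _) (bump_close (normalize f) z eps2').
    have := Hq z; rewrite /bump eqxx /normalize s0 mul0r add0r; lra.
  - have [v vK] : exists v, v \in K.
      apply/set0Pn; apply/negP => /eqP K0; move: s0; rewrite K0 big_set0 subr0.
      by move=> E; move: fpos; rewrite E.
    have [_ Hq _] := Heps _ (aff_all _) (bump_close (normalize f) v eps2).
    have := Hq K (max_is_clique Hi); rewrite sum_bump // sum_norm.
    move/eqP: s0; rewrite subr_eq0 => /eqP <-; rewrite divff ?gt_eqF //; lra.
  - case: Hi => HC H5.
    have [c cC] := chordless_ne H5.
    have [_ _ Hq] := Heps _ (aff_all _) (bump_close (normalize f) c eps2).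
    have := Hq C (chordless_is_odd HC); rewrite sum_bump // sum_norm.
    move/eqP: s0; rewrite subr_eq0 => /eqP <-.
    rewrite intrM mulrC mulKf ?gt_eqF // -(half2R (Hodd _ HC)).
    move: ((((#|C|).-1./2)%:Z)%:~R) => h; lra.
move=> HU.
have /in_UP H1 := HU.
have fpos : 0 < f None.
  have [K mK] := ex_max_clique0 e.
  have := H1 (FK K) mK; rewrite /= => H.
  have : 0 <= \sum_(x in K) f (Some x) by apply: sumr_ge0 => x _; apply: le_trans (H1 (Fz x) I).
  move: H; move: (f None) (\sum_(x in K) f (Some x)) => a b; clear => *; lia.
have tpos : 0 < (f None)%:~R :> RR by rewrite ltr0z.
have t1 : 1 <= (f None)%:~R :> RR by rewrite ler1z.
have Hp : HSTAB e (normalize f).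
  by have [] := proj2 (ehr_iff e_sym e_irr f) (conj fpos (in_U_mono (ler01 : (0 : int) <= 1) HU)).
split=> //; split=> //.
set t := (f None)%:~R : RR.
have v0 : 0 <= #|V|%:R :> RR by [].
exists ((t * (#|V|%:R + 1))^-1); split.
  by rewrite invr_gt0 mulr_gt0 //; lra.
move=> q _ Hq.
have qle : forall x, q x <= normalize f x + (t * (#|V|%:R + 1))^-1.
  by move=> x; have := Hq x; rewrite ltr_distl => /andP[_ /ltW].
have qge : forall x, normalize f x - (t * (#|V|%:R + 1))^-1 <= q x.
  by move=> x; have := Hq x; rewrite ltr_distl => /andP[/ltW].
have sumq : forall A : {set V}, \sum_(x in A) q x <=
    \sum_(x in A) normalize f x + #|A|%:R * (t * (#|V|%:R + 1))^-1.
  move=> A; apply: le_trans (ler_sum _ (fun x _ => qle x)) _.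
  by rewrite big_split /= sumr_const mulr_natl.
have kV : forall A : {set V}, #|A|%:R <= #|V|%:R :> RR by move=> A; rewrite ler_nat max_card.
have q0 : forall z, 0 <= q z.
  move=> z; apply: le_trans (qge z); rewrite subr_ge0 /normalize -/t.
  have fz : 1 <= (f (Some z))%:~R :> RR by rewrite ler1z; apply: (H1 (Fz z) I).
  have epsle : (t * (#|V|%:R + 1))^-1 <= t^-1.
    rewrite invfM; apply: ler_piMr; first by rewrite invr_ge0; lra.
    by rewrite invf_le1; lra.
  have : 1 * t^-1 <= (f (Some z))%:~R / t by rewrite ler_pM2r ?invr_gt0.
  lra.
have qK : forall K, is_maximal_clique e K -> \sum_(x in K) q x <= 1.
  move=> K mK; apply: le_trans (sumq K) _; rewrite sum_norm -/t.
  apply: (real_help tpos v0 (ler0n _ _) (kV _)).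
  have := H1 (FK K) mK; rewrite /= => H.
  have : (\sum_(x in K) f (Some x)) <= f None - 1 by move: H; move: (f None) (\sum_(x in K) f (Some x)) => a b; clear => *; lia.
  by rewrite -(ler_int RR) intrB /= -/t mulr1.
have qC : forall C, is_chordless_odd_cycle e C -> (5 <= #|C|)%N ->
    (\sum_(x in C) q x) * 2 <= 1 * ((#|C|).-1)%:R.
  move=> C HC H5.
  rewrite mul1r predn_R ?(leq_trans _ H5) // -(half2R (Hodd _ HC)) [_ * 2]mulrC.
  apply: ler_wpM2l => //; apply: le_trans (sumq C) _; rewrite sum_norm -/t.
  apply: (real_help tpos v0 (ler0n _ _) (kV _)).
  have := H1 (FC C) (conj HC H5); rewrite /= => H.
  have : (\sum_(x in C) f (Some x)) <= f None * ((#|C|).-1./2)%:Z - 1.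
    by move: H; move: (f None * ((#|C|).-1./2)%:Z) (\sum_(x in C) f (Some x)) => a b; clear => *; lia.
  by rewrite -(ler_int RR) intrB intrM /= -/t.
split.
- exact: q0.
- by move=> K cK; apply: (cliqueB q0 qK cK).
- move=> C HCo; have := oddCycleB e_sym e_irr q0 qK qC HCo.
  rewrite mul1r predn_R ?(leq_trans _ (odd_cycle_card HCo)) //.
  by rewrite ler_pdivlMr.
Qed.

End Real2.

Section Laurent.
Variables (V : finType) (K : fieldType).

Local Notation n := #|{: option V}|.
Local Notation LF := (Lfield V K).
Local Notation Tmon := (@Tmon V K).
Local Notation Tvar := (@Tvar V K).
Local Notation constL := (@constL V K).
Local Notation tofracL := (@tofracL V K).
Local Notation L := (option V -> int).

Lemma mpolyX_neq0 (m : 'X_{1..n}) : 'X_[m] != 0 :> {mpoly K[n]}.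
Proof.
apply/negP => /eqP E; have := mcoeffX K m m; rewrite E mcoeff0 eqxx => /esym/eqP.
by rewrite oner_eq0.
Qed.

Lemma Tvar_neq0 z : Tvar z != 0.
Proof. by rewrite /Tvar /tofracL tofrac_eq0 mpolyX_neq0. Qed.

Lemma Tmon_add f g : Tmon (addL f g) = Tmon f * Tmon g.
Proof.
by rewrite /Defs.Tmon -big_split /=; apply: eq_bigr => z _; rewrite /addL expfzDr // Tvar_neq0.
Qed.

Lemma Tmon0 : Tmon (fun _ => 0) = 1.
Proof. by rewrite /Defs.Tmon big1. Qed.

Lemma Tmon_ext f g : (forall o, f o = g o) -> Tmon f = Tmon g.
Proof. by move=> E; rewrite /Defs.Tmon; apply: eq_bigr => z _; rewrite E. Qed.

Lemma Tmon_neq0 f : Tmon f != 0.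
Proof. by rewrite /Defs.Tmon prodf_seq_neq0; apply/allP => z _; rewrite expfz_neq0 // Tvar_neq0. Qed.

Lemma Tmon_opp f : Tmon (fun o => - f o) = (Tmon f)^-1.
Proof.
apply: (mulfI (Tmon_neq0 f)); rewrite divff ?Tmon_neq0 // -Tmon_add -Tmon0.
by apply: Tmon_ext => o; rewrite /addL subrr.
Qed.

Definition monh (h : L) : 'X_{1..n} := [multinom `|h (enum_val i)|%N | i < n].

Lemma Tmon_pos h : (forall o, 0 <= h o) -> Tmon h = tofracL 'X_[monh h].
Proof.
move=> hp; rewrite /Defs.Tmon /tofracL (mpolyXE_id K) rmorph_prod /=.
rewrite (reindex (@enum_rank _)) /=; last by apply: onW_bij; apply: enum_rank_bij.
apply: eq_bigr => z _; rewrite /Tvar /tofracL rmorphXn /= mnmE enum_rankK.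
by rewrite exprnP abszE ger0_norm.
Qed.

Definition eqf (f g : L) : bool := [forall o, f o == g o].

Lemma eqfP f g : reflect (forall o, f o = g o) (eqf f g).
Proof. by apply: (iffP forallP) => H o; [apply/eqP|apply/eqP]. Qed.

Lemma monh_eq h1 h2 : (forall o, 0 <= h1 o) -> (forall o, 0 <= h2 o) ->
  (monh h1 == monh h2) = eqf h1 h2.
Proof.
move=> p1 p2; apply/eqP/eqfP => [E o|E].
  have := congr1 (fun m : 'X_{1..n} => m (enum_rank o)) E; rewrite !mnmE enum_rankK.
  by move=> /(congr1 Posz); rewrite !abszE !ger0_norm.
by apply/mnmP => i; rewrite !mnmE E.
Qed.

Definition ev (s : seq (K * L)) : LF := \sum_(p <- s) constL p.1 * Tmon p.2.
Definition cf (s : seq (K * L)) (g : L) : K := \sum_(p <- s | eqf p.2 g) p.1.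

Lemma constL_mp c : constL c = tofracL (c%:MP).
Proof. by []. Qed.

Lemma indep s : ev s = 0 -> forall g, cf s g = 0.
Proof.
move=> E g.
pose N : L := fun o => \sum_(p <- s) `|p.2 o|%:Z + `|g o|%:Z.
have Np : forall p, List.In p s -> forall o, 0 <= addL N p.2 o.
  move=> p Ps o; rewrite /addL /N.
  have : `|p.2 o|%:Z <= \sum_(q <- s) `|q.2 o|%:Z.
    elim: s Ps {E N} => [|q s IH] //= [->|Ps]; rewrite big_cons.
      by rewrite lerDl sumr_ge0.
    by apply: le_trans (IH Ps) _; rewrite lerDr.
  have : - p.2 o <= `|p.2 o|%:Z by rewrite abszE -normrN ler_norm.
  have : 0 <= `|g o|%:Z by [].
  move: (\sum_(q <- s) `|q.2 o|%:Z) (`|p.2 o|%:Z) (`|g o|%:Z) (p.2 o) => a b c d; clear; lia.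
have Ng : forall o, 0 <= addL N g o.
  move=> o; rewrite /addL /N.
  have : 0 <= \sum_(q <- s) `|q.2 o|%:Z by apply: sumr_ge0.
  have : - g o <= `|g o|%:Z by rewrite abszE -normrN ler_norm.
  move: (\sum_(q <- s) `|q.2 o|%:Z) (`|g o|%:Z) (g o) => a c d; clear; lia.
have eqfN : forall f, eqf (addL N f) (addL N g) = eqf f g.
  move=> f; apply/eqfP/eqfP => H o; last by rewrite /addL H.
  by have := H o; rewrite /addL => /addrI.
pose P (s' : seq (K * L)) : {mpoly K[n]} := \sum_(p <- s') p.1 *: 'X_[monh (addL N p.2)].
have EP : forall s', (forall p, List.In p s' -> forall o, 0 <= addL N p.2 o) ->
    tofracL (P s') = Tmon N * ev s'.
  elim=> [|q s' IH] Hs'; first by rewrite /P /ev !big_nil /tofracL rmorph0 mulr0.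
  rewrite /P /ev !big_cons /tofracL rmorphD /= mulrDr; congr (_ + _); last first.
    by apply: IH => p Ps'; apply: Hs'; right.
  have T := Tmon_pos (Hs' q (or_introl erefl)); rewrite /tofracL in T.
  rewrite -mul_mpolyC rmorphM /= -T Tmon_add mulrCA //.
have CP : forall s', (forall p, List.In p s' -> forall o, 0 <= addL N p.2 o) ->
    mcoeff (monh (addL N g)) (P s') = cf s' g.
  elim=> [|q s' IH] Hs'; first by rewrite /P /cf !big_nil mcoeff0.
  rewrite /P /cf !big_cons mcoeffD mcoeffZ mcoeffX monh_eq ?eqfN //; last first.
    by apply: Hs'; left.
  rewrite -/(P s') IH; last by move=> p Ps'; apply: Hs'; right.
  by case: ifP => _; rewrite ?mulr1 ?mulr0 ?add0r.
have P0 : P s = 0.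
  by apply/eqP; rewrite -(tofrac_eq0 (R := {mpoly K[n]})) -/(tofracL _) EP // E mulr0.
by rewrite -CP // P0 mcoeff0.
Qed.

End Laurent.

Fixpoint AllP {T : Type} (P : T -> Prop) (s : seq T) : Prop :=
  match s with [::] => True | x :: s' => P x /\ AllP P s' end.

Lemma AllP_cat {T} (P : T -> Prop) s t : AllP P (s ++ t) <-> AllP P s /\ AllP P t.
Proof. by elim: s => [|x s IH] /=; [tauto | rewrite IH; tauto]. Qed.

Lemma AllP_map {T U} (f : T -> U) (P : U -> Prop) s : AllP P (map f s) <-> AllP (fun x => P (f x)) s.
Proof. by elim: s => [|x s IH] /=; [tauto | rewrite IH; tauto]. Qed.

Lemma AllP_impl {T} (P Q : T -> Prop) s : (forall x, P x -> Q x) -> AllP P s -> AllP Q s.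
Proof. by move=> H; elim: s => [|x s IH] //= [] /H ? /IH. Qed.

Lemma AllP_filter {T} (P : T -> Prop) (B : pred T) s : AllP P s -> AllP P (filter B s).
Proof. by elim: s => [|x s IH] //= [Px /IH H]; case: (B x). Qed.

Lemma AllP_allpairs {T U W} (f : T -> U -> W) (P : W -> Prop) s t :
  (forall x y, List.In x s -> List.In y t -> P (f x y)) -> AllP P [seq f x y | x <- s, y <- t].
Proof.
elim: s => [|x s IH] H //; rewrite allpairs_cons; apply/AllP_cat; split.
  apply/AllP_map; have : forall y, List.In y t -> P (f x y) by move=> y; apply: H; left.
  by elim: t {H IH} => [|y t IHt] //= Ht; split; [apply: Ht; left | apply: IHt => z Hz; apply: Ht; right].
by apply: IH => x' y Hx Hy; apply: H => //; right.
Qed.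

Lemma AllP_In {T} (P : T -> Prop) s : AllP P s -> forall x, List.In x s -> P x.
Proof. by elim: s => [|y s IH] //= [Py Hs] x [<-|/IH]; [| apply]. Qed.

Section Ev.
Variables (V : finType) (K : fieldType).
Local Notation LF := (Lfield V K).
Local Notation Tmon := (@Tmon V K).
Local Notation constL := (@constL V K).
Local Notation L := (option V -> int).
Local Notation ev := (@ev V K).
Local Notation cf := (@cf V K).
Local Notation eqf := (@eqf V).

Lemma constLD a b : constL (a + b) = constL a + constL b.
Proof. by rewrite /Defs.constL /tofracL mpolyCD rmorphD. Qed.
Lemma constLM a b : constL (a * b) = constL a * constL b.
Proof. by rewrite /Defs.constL /tofracL mpolyCM rmorphM. Qed.
Lemma constLN a : constL (- a) = - constL a.
Proof. by rewrite /Defs.constL /tofracL mpolyCN rmorphN. Qed.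
Lemma constL0 : constL 0 = 0.
Proof. by rewrite /Defs.constL /tofracL mpolyC0 rmorph0. Qed.
Lemma constL1 : constL 1 = 1.
Proof. by rewrite /Defs.constL /tofracL mpolyC1 rmorph1. Qed.
Lemma constL_sum (s : seq (K * L)) (P : pred (K * L)) :
  constL (\sum_(p <- s | P p) p.1) = \sum_(p <- s | P p) constL p.1.
Proof. by elim/big_rec2: _ => [|p a b _ <-]; rewrite ?constL0 ?constLD. Qed.

Lemma ev_nil : ev [::] = 0. Proof. by rewrite /ev big_nil. Qed.
Lemma ev_cons p s : ev (p :: s) = constL p.1 * Tmon p.2 + ev s.
Proof. by rewrite /ev big_cons. Qed.
Lemma ev_cat s t : ev (s ++ t) = ev s + ev t.
Proof. by rewrite /ev big_cat. Qed.

Definition shiftS (mu : L) (s : seq (K * L)) := [seq (p.1, addL p.2 mu) | p <- s].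
Definition negS (s : seq (K * L)) := [seq (- p.1, p.2) | p <- s].
Definition mulS (s t : seq (K * L)) := [seq (p.1 * q.1, addL p.2 q.2) | p <- s, q <- t].

Lemma ev_shift mu s : ev (shiftS mu s) = ev s * Tmon mu.
Proof.
rewrite /ev /shiftS big_map mulr_suml; apply: eq_bigr => p _ /=.
by rewrite Tmon_add mulrA.
Qed.

Lemma ev_neg s : ev (negS s) = - ev s.
Proof. by rewrite /ev /negS big_map -sumrN; apply: eq_bigr => p _ /=; rewrite constLN mulNr. Qed.

Lemma ev_mul s t : ev (mulS s t) = ev s * ev t.
Proof.
elim: s => [|p s IH]; first by rewrite /mulS /= ev_nil mul0r.
rewrite /mulS allpairs_cons ev_cat -/(mulS s t) IH ev_cons mulrDl; congr (_ + _).
rewrite /ev big_map mulr_sumr; apply: eq_bigr => q _ /=.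
by rewrite constLM Tmon_add; ring.
Qed.

Lemma eqf_refl f : eqf f f. Proof. by apply/eqfP. Qed.
Lemma eqf_sym f g : eqf f g = eqf g f.
Proof. by apply/eqfP/eqfP => H o; rewrite H. Qed.
Lemma eqf_trans f g h : eqf f g -> eqf g h -> eqf f h.
Proof. by move=> /eqfP H1 /eqfP H2; apply/eqfP => o; rewrite H1 H2. Qed.

Lemma cf_cat s t g : cf (s ++ t) g = cf s g + cf t g.
Proof. by rewrite /cf big_cat. Qed.
Lemma cf_neg s g : cf (negS s) g = - cf s g.
Proof. by rewrite /cf /negS big_map -sumrN. Qed.
Lemma cf_shift mu s g : cf (shiftS mu s) (addL g mu) = cf s g.
Proof.
rewrite /cf /shiftS big_map /=; apply: eq_bigl => p /=.
apply/eqfP/eqfP => H o; last by rewrite /addL H.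
by have := H o; rewrite /addL => /addIr.
Qed.

Lemma cf_filter (B : pred L) s g : (forall f h, eqf f h -> B f = B h) ->
  cf (filter (fun p => B p.2) s) g = if B g then cf s g else 0.
Proof.
move=> HB; rewrite /cf big_filter_cond; case: ifP => Bg.
  apply: eq_bigl => p; case E: (eqf p.2 g); rewrite ?andbF ?andbT //.
  by rewrite (HB _ _ E).
rewrite big_pred0 // => p; case E: (eqf p.2 g); rewrite ?andbF //.
by rewrite (HB _ _ E) Bg.
Qed.

Lemma ev_eq_cf s t : ev s = ev t -> forall g, cf s g = cf t g.
Proof.
move=> E g; apply/eqP; rewrite -subr_eq0 -cf_neg -cf_cat; apply/eqP.
by apply: indep; rewrite ev_cat ev_neg E subrr.
Qed.

Lemma ev_split (B : pred (K * L)) s : ev s = ev (filter B s) + ev (filter (predC B) s).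
Proof. by rewrite /ev !big_filter (bigID B). Qed.

Lemma ev_cf0 s : (forall g, cf s g = 0) -> ev s = 0.
Proof.
move: {2}(size s) (leqnn (size s)) => m; elim: m s => [|m IH] [|p s] //= Hs H0;
  rewrite ?ev_nil //.
set g0 := p.2.
have HB : forall f h, eqf f h -> eqf f g0 = eqf h g0.
  move=> f h E; apply/idP/idP => H; [apply: eqf_trans H; rewrite eqf_sym // | exact: eqf_trans E H].
rewrite (ev_split (fun q => eqf q.2 g0)).
have -> : ev (filter (fun q => eqf q.2 g0) (p :: s)) = constL (cf (p :: s) g0) * Tmon g0.
  rewrite /ev /cf big_filter constL_sum mulr_suml; apply: eq_bigr => q /eqfP E.
  by rewrite (@Tmon_ext V K _ _ E).
rewrite H0 constL0 mul0r add0r.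
have -> : filter (predC (fun q => eqf q.2 g0)) (p :: s) = filter (fun q => ~~ eqf q.2 g0) s.
  by rewrite /= eqf_refl.
apply: IH.
  by rewrite size_filter (leq_trans (count_size _ _)) //.
move=> h; rewrite (cf_filter (B := fun f => ~~ eqf f g0)); last by move=> f k E; rewrite (HB _ _ E).
case: ifP => // Bh.
have := H0 h; rewrite /cf big_cons.
case: ifP => [E|_ //]; by move: Bh; rewrite eqf_sym /g0 E.
Qed.

End Ev.

Section Div.
Variables (V : finType) (e : rel V).
Hypothesis e_sym : ssrbool.symmetric e.
Hypothesis e_irr : irreflexive e.
Variable (K : fieldType).

Local Notation LF := (Lfield V K).
Local Notation Tmon := (@Tmon V K).
Local Notation constL := (@constL V K).
Local Notation L := (option V -> int).
Local Notation ev := (@ev V K).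
Local Notation cf := (@cf V K).
Local Notation eqf := (@eqf V).
Local Notation inR := (@inR V e K).

Definition Sp (a : int) (x : LF) : Prop :=
  exists s : seq (K * L), AllP (fun p => in_U e a p.2) s /\ x = ev s.

Definition zeroL : L := fun _ => 0.

Lemma in_U_zero : in_U e 0 zeroL.
Proof.
apply/in_UP => -[z|K0|C] _ //=; rewrite /zeroL ?big1 // ?subr0 ?mul0r //.
Qed.

Lemma Sp_T a mu : in_U e a mu -> Sp a (Tmon mu).
Proof. by move=> H; exists [:: (1, mu)]; split=> //=; rewrite ev_cons ev_nil constL1 mul1r addr0. Qed.

Lemma Sp_const c : Sp 0 (constL c).
Proof.
exists [:: (c, zeroL)]; split=> //=; first by split=> //; apply: in_U_zero.
by rewrite ev_cons ev_nil addr0 /zeroL Tmon0 mulr1.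
Qed.

Lemma Sp_0 a : Sp a 0.
Proof. by exists [::]; rewrite ev_nil. Qed.

Lemma Sp_add a x y : Sp a x -> Sp a y -> Sp a (x + y).
Proof.
move=> [s [Hs ->]] [t [Ht ->]]; exists (s ++ t); split; last by rewrite ev_cat.
by apply/AllP_cat.
Qed.

Lemma Sp_mul a b x y : Sp a x -> Sp b y -> Sp (a + b) (x * y).
Proof.
move=> [s [Hs ->]] [t [Ht ->]]; exists (mulS s t); split; last by rewrite ev_mul.
apply: AllP_allpairs => p q Ps Qt /=; apply: in_U_add.
  exact: (AllP_In Hs Ps).
exact: (AllP_In Ht Qt).
Qed.

Lemma Sp_sum a m (F : 'I_m -> LF) : (forall i, Sp a (F i)) -> Sp a (\sum_(i < m) F i).
Proof. by move=> H; elim/big_ind: _ => //; [apply: Sp_0 | move=> x y; apply: Sp_add]. Qed.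

Lemma Sp_ext a b x : a = b -> Sp a x -> Sp b x.
Proof. by move=> ->. Qed.

Lemma cf_AllP_zero (P : L -> Prop) r h : AllP (fun p => P p.2) r -> ~ P h ->
  (forall f g, eqf f g -> P f -> P g) -> cf r h = 0.
Proof.
move=> Hr Ph HP; elim: r Hr => [|p r IH] /=; first by rewrite /cf big_nil.
move=> [Pp Hr].
rewrite /cf big_cons; case: ifP => E; last exact: IH.
by exfalso; apply: Ph; apply: HP E Pp.
Qed.

Lemma in_U_eqf n f g : eqf f g -> in_U e n f -> in_U e n g.
Proof. by move=> /eqfP E; apply: in_U_ext. Qed.

Lemma Sp_Tinv a mu : Sp a (Tmon mu) -> in_U e a mu.
Proof.
move=> [s [Hs E]]; apply: Classical_Prop.NNPP => N.
have := ev_eq_cf (s := [:: (1, mu)]) (t := s); rewrite ev_cons ev_nil constL1 mul1r addr0.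
move=> /(_ E mu); rewrite (cf_AllP_zero Hs N) //; last by move=> f g; apply: in_U_eqf.
by rewrite /cf big_cons eqf_refl big_nil addr0 => /eqP; rewrite oner_eq0.
Qed.

Lemma in_U0_cases f : in_U e 0 f -> (forall o, f o = 0) \/ 0 < f None.
Proof.
move=> /in_UP H.
case: (ltP 0 (f None)) => [|fN]; [by right | left].
have fz : forall z, f (Some z) = 0.
  move=> z; have [K0 [mK zK]] := vertex_in_max e z.
  have := H (FK K0) mK; rewrite /= subr_ge0 => HS.
  have : f (Some z) <= \sum_(x in K0) f (Some x).
    rewrite (bigD1 z) //= lerDl; apply: sumr_ge0 => x _; exact: (H (Fz x) I).
  have := H (Fz z) I; rewrite /= => h0 h1.
  apply/eqP; rewrite eq_le h0 andbT; apply: le_trans h1 _; exact: le_trans HS fN.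
have fN0 : f None = 0.
  have [K0 mK] := ex_max_clique0 e.
  have := H (FK K0) mK; rewrite /= big1 ?subr0 // => ge.
  by apply/eqP; rewrite eq_le fN ge.
by case.
Qed.

Lemma T_inR f : in_U e 0 f -> inR (Tmon f).
Proof.
move=> H; case: (in_U0_cases H) => [Z|fp].
  by rewrite (@Tmon_ext V K f zeroL Z) /zeroL Tmon0 -constL1; apply: inR_const.
by apply: inR_gen; apply/(ehr_iff e_sym e_irr).
Qed.

Lemma inR_Sp0 x : inR x <-> Sp 0 x.
Proof.
split.
  elim=> [c|f Hf|a b _ Ha _ Hb|a b _ Ha _ Hb].
  - exact: Sp_const.
  - by apply: Sp_T; case: (proj1 (ehr_iff e_sym e_irr f) Hf).
  - exact: Sp_add.
  - by have := Sp_mul Ha Hb; rewrite addr0.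
move=> [s [Hs ->]]; elim: s Hs => [|p s IH] /= => [_|[Hp Hs]].
  by rewrite ev_nil -constL0; apply: inR_const.
rewrite ev_cons; apply: inR_add; last exact: IH.
by apply: inR_mul; [apply: inR_const | apply: T_inR].
Qed.

Lemma in_U_ex_ge N : exists h, in_U e N h.
Proof. exact: in_U_ex. Qed.

Lemma Sp_QR a x : Sp a x -> QR e x.
Proof.
move=> [s [Hs ->]].
have [h Hh] := in_U_ex e (`|a|%:Z).
have Ha : 0 <= a + `|a|%:Z by rewrite abszE; rewrite -lerBlDl sub0r -normrN ler_norm.
have Hh0 : in_U e 0 h by apply: in_U_mono Hh.
exists (ev (shiftS h s)), (Tmon h); split.
- apply/inR_Sp0; exists (shiftS h s); split=> //.
  apply/AllP_map; apply: AllP_impl Hs => p /= Hp.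
  exact: in_U_mono Ha (in_U_add Hp Hh).
- exact: T_inR.
- exact: Tmon_neq0.
- by rewrite ev_shift mulfK // Tmon_neq0.
Qed.

Lemma colonR_ext (I J : LF -> Prop) : (forall x, I x <-> J x) ->
  forall x, colonR e I x <-> colonR e J x.
Proof.
move=> H x; split; move=> [Qx Hx]; split=> // y Hy; apply: Hx; by apply/H.
Qed.

Lemma idprod_ext (I J I' J' : LF -> Prop) : (forall x, I x <-> I' x) -> (forall x, J x <-> J' x) ->
  forall x, idprod I J x <-> idprod I' J' x.
Proof.
move=> H1 H2 x; split; move=> [m [a [b [Hab ->]]]]; exists m, a, b; split=> // i;
  have [? ?] := Hab i; split; by [apply/H1 | apply/H2].
Qed.

Lemma dmul_ext (I J I' J' : LF -> Prop) : (forall x, I x <-> I' x) -> (forall x, J x <-> J' x) ->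
  forall x, dmul e I J x <-> dmul e I' J' x.
Proof.
move=> H1 H2; apply: colonR_ext; apply: colonR_ext; exact: idprod_ext.
Qed.

Definition Bdec (P : Prop) : bool :=
  if ClassicalEpsilon.excluded_middle_informative P then true else false.

Lemma BdecP (P : Prop) : reflect P (Bdec P).
Proof. by rewrite /Bdec; case: ClassicalEpsilon.excluded_middle_informative => H; constructor. Qed.

Lemma colon_Sp (I : LF -> Prop) a :
  (forall y, I y -> Sp a y) ->
  (exists nu, I (Tmon nu)) ->
  (forall g, ~ in_U e (- a) g -> exists mu, I (Tmon mu) /\ ~ in_U e 0 (addL g mu)) ->
  forall x, colonR e I x <-> Sp (- a) x.
Proof.
move=> HI [nu Inu] Hrich x; split; last first.
  move=> Hx; split; first exact: Sp_QR Hx.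
  move=> y /HI Hy; apply/inR_Sp0; have := Sp_mul Hx Hy; by rewrite addNr.
move=> [Qx Hx].
have [s0 [Hs0 E0]] := proj1 (inR_Sp0 _) (Hx _ Inu).
pose s := shiftS (fun o => - nu o) s0.
have Ex : x = ev s.
  by rewrite /s ev_shift -E0 Tmon_opp mulfK // Tmon_neq0.
pose B (f : L) := Bdec (in_U e (- a) f).
have HB : forall f g, eqf f g -> B f = B g.
  move=> f g E; apply/BdecP/BdecP; apply: in_U_eqf => //; by rewrite eqf_sym.
have Ebad : ev (filter (predC (fun p => B p.2)) s) = 0.
  apply: ev_cf0 => g.
  rewrite (cf_filter (B := fun f => ~~ B f)); last by move=> f h E; rewrite (HB _ _ E).
  case: ifP => // /negP Bg.
  have Ng : ~ in_U e (- a) g by move=> H; apply: Bg; apply/BdecP.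
  have [mu [Imu Nmu]] := Hrich g Ng.
  have [r [Hr Er]] := proj1 (inR_Sp0 _) (Hx _ Imu).
  have := ev_eq_cf (s := shiftS mu s) (t := r); rewrite ev_shift -Ex Er => /(_ erefl (addL g mu)).
  rewrite cf_shift => ->; apply: (cf_AllP_zero Hr Nmu).
  by move=> f h; apply: in_U_eqf.
exists (filter (fun p => B p.2) s); split.
  elim: (s) => [|p t IH] //=; case: ifP => Bp //=; split=> //; exact/BdecP.
by rewrite Ex {1}(ev_split (fun p => B p.2) s) Ebad addr0.
Qed.

End Div.

Lemma AllP_nth {T} (P : T -> Prop) (s : seq T) d : AllP P s -> forall i, (i < size s)%N -> P (nth d s i).
Proof. by elim: s => [|x s IH] //= [Px Hs] [|i] //= Hi; apply: IH. Qed.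

Section Main.
Variables (V : finType) (e : rel V).
Hypothesis e_sym : ssrbool.symmetric e.
Hypothesis e_irr : irreflexive e.
Variable (K : fieldType).

Local Notation LF := (Lfield V K).
Local Notation Tmon := (@Tmon V K).
Local Notation L := (option V -> int).
Local Notation Sp := (@Sp V e K).

Lemma omega_Sp1 x : omega e x <-> Sp 1 x.
Proof.
split.
  move=> [m [c [f [Hf ->]]]]; apply: Sp_sum => i.
  apply: (@Sp_ext V e K (0 + 1)); first by rewrite add0r.
  apply: Sp_mul; first exact: Sp_const.
  by apply: Sp_T; apply/(omega_iff e_sym e_irr).
move=> [s [Hs ->]].
pose d : K * L := (0, @zeroL V).
exists (size s), (fun i => (nth d s i).1), (fun i => (nth d s i).2); split.
  move=> i; apply/(omega_iff e_sym e_irr).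
  exact: (AllP_nth d Hs (ltn_ord i)).
by rewrite /ev (big_nth d) big_mkord.
Qed.

Lemma dmul_Sp a b x : dmul e (Sp a) (Sp b) x <-> Sp (a + b) x.
Proof.
have step1 : forall y, colonR e (idprod (Sp a) (Sp b)) y <-> Sp (- (a + b)) y.
  apply: (colon_Sp e_sym e_irr) => //.
  - move=> y [m [a' [b' [Hab ->]]]]; apply: Sp_sum => i.
    by have [Ha Hb] := Hab i; apply: Sp_mul.
  - have [m1 H1] := in_U_ex e a; have [m2 H2] := in_U_ex e b.
    exists (addL m1 m2), 1%N, (fun _ => Tmon m1), (fun _ => Tmon m2); split.
      by move=> i; split; apply: Sp_T.
    by rewrite big_ord1 Tmon_add.
  - move=> g Ng.
    have Ng' : ~ in_U e ((- a) + (- b)) g by rewrite -opprD.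
    have [m1 [m2 [H1 H2 H3]]] := richness e_sym Ng'.
    rewrite !opprK in H1 H2.
    exists (addL m1 m2); split=> //.
    exists 1%N, (fun _ => Tmon m1), (fun _ => Tmon m2); split.
      by move=> i; split; apply: Sp_T.
    by rewrite big_ord1 Tmon_add.
have step2 : forall y, colonR e (Sp (- (a + b))) y <-> Sp (- - (a + b)) y.
  apply: (colon_Sp e_sym e_irr) => //.
  - have [m1 H1] := in_U_ex e (- (a + b)).
    by exists m1; apply: Sp_T.
  - move=> g Ng.
    have Ng' : ~ in_U e ((a + b) + 0) g by rewrite addr0 -(opprK (a + b)).
    have [m1 [m2 [H1 H2 H3]]] := richness e_sym Ng'.
    exists (addL m1 m2); split=> //; apply: Sp_T.
    by have := in_U_add H1 H2; rewrite oppr0 addr0.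
rewrite /dmul; apply: iff_trans (colonR_ext e step1 x) _.
apply: iff_trans (step2 x) _; rewrite opprK; exact: iff_refl.
Qed.

Lemma iter_ext (F : (LF -> Prop) -> (LF -> Prop)) (P : nat -> LF -> Prop) (X : LF -> Prop) m :
  (forall x, X x <-> P 0%N x) ->
  (forall k (Y : LF -> Prop), (forall x, Y x <-> P k x) -> forall x, F Y x <-> P k.+1 x) ->
  forall x, iter m F X x <-> P m x.
Proof.
move=> H0 HS; elim: m => [|m IH] //=.
by apply: HS.
Qed.

Lemma dpow_Sp n x : dpow e (@omega V e K) n x <-> Sp n x.
Proof.
case: n => m /=.
  apply: (iter_ext (P := fun k => Sp k%:Z)) => [y|k Y HY y].
    exact: (inR_Sp0 e_sym e_irr).
  apply: iff_trans (dmul_ext e (I' := Sp 1) (J' := Sp k%:Z) omega_Sp1 HY y) _.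
  apply: iff_trans (dmul_Sp _ _ y) _; rewrite -PoszD add1n; exact: iff_refl.
have Hc : forall y, colonR e (@omega V e K) y <-> Sp (-1) y.
  move=> y; apply: iff_trans (colonR_ext e (J := Sp 1) omega_Sp1 y) _.
  move: y; apply: (colon_Sp e_sym e_irr) => //.
  - by have [m1 H1] := in_U_ex e 1; exists m1; apply: Sp_T.
  - move=> g Ng.
    have Ng' : ~ in_U e ((-1) + 0) g by rewrite addr0.
    have [m1 [m2 [H1 H2 H3]]] := richness e_sym Ng'.
    exists (addL m1 m2); split=> //; apply: Sp_T.
    by have := in_U_add H1 H2; rewrite oppr0 addr0 opprK.
rewrite NegzE.
rewrite -iterS.
move: x; apply: (@iter_ext _ (fun k => Sp (- k%:Z)) _ m.+1) => [y|k Y HY y].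
  by rewrite oppr0; exact: (inR_Sp0 e_sym e_irr).
apply: iff_trans (dmul_ext e (I' := Sp (-1)) (J' := Sp (- k%:Z)) Hc HY y) _.
apply: iff_trans (dmul_Sp _ _ y) _; rewrite -opprD -PoszD add1n; exact: iff_refl.
Qed.

End Main.

Unset Implicit Arguments.

Theorem proposition3p7 (V : finType) (e : rel V)
  (e_sym : ssrbool.symmetric e) (e_irr : irreflexive e)
  (K : fieldType) (n : int) (mu : option V -> int) :
  @dpow V e K (@omega V e K) n (@Tmon V K mu) <-> in_U e n mu.
Proof.
have H := dpow_Sp e_sym e_irr (K := K) n (Tmon K mu).
apply: iff_trans H _.
by split; [exact: Sp_Tinv | exact: Sp_T].
Qed.
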